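(* Let $M$ be a connected matroid on $[n]$, $\mathcal G$ a building set of $\mathcal L_M$, and $\mathcal S$ a nested set of $\mathcal G$ with $[n]\in\mathcal S$. For $G\in\mathcal S$ let $G^-$ be the join (closure of the union) of the maximal elements of $\{H\in\mathcal S: H\subsetneq G\}$, with $G^-=\emptyset$ if this set is empty. Let $w$ be any vector in the relative interior of the cone $\mathbb R_{\ge0}\{v_G:G\in\mathcal S\}$. Then $$M_w\;=\;\bigoplus_{G\in\mathcal S} M[G^-,G].$$
   Context: A matroid $M$ of rank $r$ on $[n]$ is given by its bases; for $w\in\mathbb R^n$, $M_w$ is the matroid on $[n]$ whose bases are the bases $\sigma$ of $M$ maximizing $\sum_{i\in\sigma}w_i$. $\mathcal L_M$ is the lattice of flats (least element $\emptyset$ as $M$ is connected hence loopless, greatest $[n]$). For flats $F\subseteq G$, $M[F,G]$ is the matroid on $G\setminus F$ obtained by restricting $M$ to $G$ and contracting $F$: its bases are the sets $\tau\setminus F$ where $\tau\subseteq G$ is a maximal independent subset of $G$ containing a maximal independent subset of $F$. $v_G\in\{0,1\}^n$ is the incidence vector of $G$. $\mathcal G\subseteq\mathcal L_M\setminus\{\emptyset\}$ is a building set if for every flat $X\ne\emptyset$, with $G_1,\dots,G_k$ the maximal elements of $\mathcal G$ contained in $X$, the join map $\prod_j[\emptyset,G_j]\to[\emptyset,X]$ is a poset isomorphism ($[A,B]$ denotes the interval of flats between $A$ and $B$); $[n]$ lies in every building set since $M$ is connected. $\mathcal S\subseteq\mathcal G$ is nested if the join of any $t\ge 2$ pairwise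 incomparable elements of $\mathcal S$ is not in $\mathcal G$. *)

(* Defs.v *)
From HB Require Import structures.
From mathcomp Require Import all_boot all_order all_algebra.
From mathcomp Require Import reals.
Set Implicit Arguments. Unset Strict Implicit. Unset Printing Implicit Defensive.
Import Order.TTheory GRing.Theory Num.Theory.

Section Matroids.
Variable n : nat.
Local Notation E := 'I_n.
Local Notation sets := {set {set E}}.

Definition is_matroid (B : sets) : Prop :=
  B != set0 /\
  forall B1 B2, B1 \in B -> B2 \in B -> forall x, x \in B1 :\: B2 ->
    exists2 y, y \in B2 :\: B1 & (y |: (B1 :\ x)) \in B.

Definition indep (B : sets) (I : {set E}) : Prop := exists2 C, C \in B & I \subset C.

Definition rk (B : sets) (A : {set E}) : nat := \max_(C in B) #|A :&: C|.

Definition cl (B : sets) (A : {set E}) : {set E} := [set x | rk B (x |: A) == rk B A].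
Definition flat (B : sets) (F : {set E}) : Prop := cl B F = F.

Definition connected (B : sets) : Prop :=
  forall A : {set E}, A != set0 -> A != setT -> rk B A + rk B (~: A) <> rk B setT.

Definition maxel (P : sets) : sets :=
  [set G in P | [forall H in P, ~~ (G \proper H)]].

Definition join (B : sets) (P : sets) : {set E} := cl B (\bigcup_(H in P) H).

(* elements of the product of intervals prod_{G in Mx} [emptyset, G],
   encoded as finite functions vanishing outside Mx *)
Definition prod_elt (B : sets) (Mx : sets) (f : {ffun {set E} -> {set E}}) : Prop :=
  forall G, (G \in Mx -> flat B (f G) /\ f G \subset G) /\ (G \notin Mx -> f G = set0).

Definition join_map (B : sets) (Mx : sets) (f : {ffun {set E} -> {set E}}) : {set E} :=
  cl B (\bigcup_(G in Mx) f G).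

(* the join map prod_{G in Mx} [emptyset,G] -> [emptyset,X] is a poset isomorphism *)
Definition join_iso (B : sets) (Mx : sets) (X : {set E}) : Prop :=
  [/\ forall f, prod_elt B Mx f -> flat B (join_map B Mx f) /\ join_map B Mx f \subset X,
      forall F, flat B F -> F \subset X -> exists2 f, prod_elt B Mx f & join_map B Mx f = F
    & forall f g, prod_elt B Mx f -> prod_elt B Mx g ->
        ((forall G, G \in Mx -> f G \subset g G) <-> join_map B Mx f \subset join_map B Mx g)].

Definition building_set (B : sets) (Gs : sets) : Prop :=
  (forall G, G \in Gs -> flat B G /\ G != set0) /\
  forall X, flat B X -> X != set0 ->
    join_iso B (maxel [set G in Gs | G \subset X]) X.

Definition nested (B : sets) (Gs S : sets) : Prop :=
  S \subset Gs /\
  forall T : sets, T \subset S -> 2 <= #|T| ->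
    (forall H1 H2, H1 \in T -> H2 \in T -> H1 != H2 -> ~~ (H1 \subset H2)) ->
    join B T \notin Gs.

Definition Gminus (B : sets) (S : sets) (G : {set E}) : {set E} :=
  let P := [set H in S | H \proper G] in
  if P == set0 then set0 else join B (maxel P).

(* bases of M[F,G] (a matroid on G \ F) *)
Definition maxindep_in (B : sets) (A I : {set E}) : Prop :=
  [/\ I \subset A, indep B I & forall J : {set E}, I \subset J -> J \subset A -> indep B J -> J = I].

Definition minor_bases (B : sets) (F G : {set E}) : {set E} -> Prop :=
  fun b => exists tau, [/\ maxindep_in B G tau,
                          (exists2 s, maxindep_in B F s & s \subset tau)
                        & b = tau :\: F].

Section Weights.
Variable R : realType.
Local Open Scope ring_scope.

Definition wsum (w : 'rV[R]_n) (A : {set E}) : R := \sum_(i in A) w 0 i.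
Definition Mw_bases (B : sets) (w : 'rV[R]_n) : {set E} -> Prop :=
  fun b => b \in B /\ forall C, C \in B -> wsum w C <= wsum w b.

Definition incv (G : {set E}) : 'rV[R]_n := \row_i (i \in G)%:R.

Definition in_cone (S : sets) (u : 'rV[R]_n) : Prop :=
  exists lam : {ffun {set E} -> R},
    (forall G, G \in S -> 0 <= lam G) /\ u = \sum_(G in S) lam G *: incv G.

Definition in_aff (C : 'rV[R]_n -> Prop) (u : 'rV[R]_n) : Prop :=
  exists (k : nat) (c : 'I_k -> 'rV[R]_n) (mu : 'I_k -> R),
    [/\ forall j, C (c j), \sum_j mu j = 1 & u = \sum_j mu j *: c j].

Definition in_relint (C : 'rV[R]_n -> Prop) (w : 'rV[R]_n) : Prop :=
  C w /\ exists2 eps : R, 0 < eps &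
    forall u, in_aff C u -> (forall i, `|u 0 i - w 0 i| < eps) -> C u.

End Weights.
End Matroids.

(* Main.v *)
Require Import Defs.
From HB Require Import structures.
From mathcomp Require Import all_boot all_order all_algebra.
From mathcomp Require Import reals.
From mathcomp Require Import zify.
From mathcomp Require Import lra.
From Stdlib Require Import Classical.
Import Order.TTheory GRing.Theory Num.Theory.
Set Implicit Arguments. Unset Strict Implicit. Unset Printing Implicit Defensive.

Section MatroidBasics.
Variable n : nat.
Variable B : {set {set 'I_n}}.
Hypothesis HB : is_matroid B.
Set Default Proof Using "HB".
Implicit Types (A I J C F G : {set 'I_n}) (x y z : 'I_n).

Lemma setU1_in (x : 'I_n) (A : {set 'I_n}) : x \in A -> x |: A = A.
Proof. by move=> xA; apply/setUidPr; rewrite sub1set. Qed.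

Lemma indep_sub I J : indep B J -> I \subset J -> indep B I.
Proof. by case=> C CB JC IJ; exists C => //; apply: subset_trans JC. Qed.

Lemma basis_indep C : C \in B -> indep B C.
Proof. by move=> CB; exists C. Qed.

Lemma bases_le (C1 C2 : {set 'I_n}) : C1 \in B -> C2 \in B -> #|C1| <= #|C2|.
Proof.
move: {2}#|C1 :\: C2| (erefl #|C1 :\: C2|) => k.
elim: k C1 => [|k IH] C1 Hk C1B C2B.
  apply: subset_leq_card; rewrite -setD_eq0 -cards_eq0; exact/eqP.
have /set0Pn [x xD] : C1 :\: C2 != set0 by rewrite -card_gt0 Hk.
case: HB => _ Hex.
case: (Hex _ _ C1B C2B x xD) => y yD yB.
move: xD yD; rewrite !inE => /andP [xC2 xC1] /andP [yC1 yC2].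
have E1 : (y |: (C1 :\ x)) :\: C2 = (C1 :\: C2) :\ x.
  apply/setP => z; rewrite !inE.
  case: (eqVneq z y) => [->|]; first by rewrite yC2 /= ?andbF.
  move=> /negbTE zy; rewrite ?zy /=; by case: (z \in C2); case: (z == x); case: (z \in C1).
have E2 : #|y |: (C1 :\ x)| = #|C1|.
  rewrite cardsU1 (cardsD1 x C1) xC1 !inE (negbTE yC1) andbF /=; lia.
rewrite -E2; apply: IH => //.
rewrite E1; move: Hk; rewrite (cardsD1 x (C1 :\: C2)) !inE xC2 xC1 /=; lia.
Qed.

Lemma bases_card (C1 C2 : {set 'I_n}) : C1 \in B -> C2 \in B -> #|C1| = #|C2|.
Proof. by move=> h1 h2; apply/eqP; rewrite eqn_leq !bases_le. Qed.

Lemma rk_ge C A : C \in B -> #|A :&: C| <= rk B A.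
Proof. by move=> CB; rewrite /rk (bigD1 C) //= leq_maxl. Qed.

Lemma rk_ex A : exists2 C, C \in B & rk B A = #|A :&: C|.
Proof.
case: HB => /set0Pn [C0 C0B] _.
have h : 0 < #|B| by rewrite card_gt0; apply/set0Pn; exists C0.
by case: (eq_bigmax_cond (fun C => #|A :&: C|) h) => C CB e; exists C; rewrite // /rk e.
Qed.

Lemma rk_le_card A : rk B A <= #|A|.
Proof. by case: (rk_ex A) => C _ ->; apply: subset_leq_card; apply: subsetIl. Qed.

Lemma rk_mono A (A' : {set 'I_n}) : A \subset A' -> rk B A <= rk B A'.
Proof.
move=> AA'; case: (rk_ex A) => C CB ->.
apply: leq_trans (rk_ge _ CB); apply: subset_leq_card; exact: setSI.
Qed.

Lemma indep_card_le I A : indep B I -> I \subset A -> #|I| <= rk B A.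
Proof.
case=> C CB IC IA; apply: leq_trans (rk_ge A CB).
by apply: subset_leq_card; rewrite subsetI IA IC.
Qed.

Lemma rk_indep I : indep B I -> rk B I = #|I|.
Proof. by move=> hI; apply/eqP; rewrite eqn_leq rk_le_card indep_card_le. Qed.

Lemma card_rk_indep A : #|A| <= rk B A -> indep B A.
Proof.
case: (rk_ex A) => C CB -> h; exists C => //.
have : A :&: C == A by rewrite eqEcard subsetIl h.
by move/eqP <-; apply: subsetIr.
Qed.

Lemma rk_U1 x A : rk B (x |: A) <= (rk B A).+1.
Proof.
rewrite /rk; apply/bigmax_leqP => C CB.
apply: leq_trans (_ : #|x |: (A :&: C)| <= _).
  by apply: subset_leq_card; rewrite setIUl; apply: setSU; apply: subsetIl.
  rewrite cardsU1; have := rk_ge A CB; rewrite /rk.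
  have : nat_of_bool (x \notin A :&: C) <= 1 by case: (x \notin _).
  move: (nat_of_bool _) (\max_(C0 in B) _) => k m k1 cm.
  by rewrite -add1n; apply: leq_add.
Qed.

Lemma rk0 : rk B set0 = 0.
Proof. by apply/eqP; rewrite -leqn0 -(cards0 'I_n) rk_le_card. Qed.

Definition maxi (A I : {set 'I_n}) : Prop :=
  [/\ I \subset A, indep B I & forall y, y \in A -> y \notin I -> ~ indep B (y |: I)].

Lemma maxiP A I : maxi A I <-> maxindep_in B A I.
Proof.
split.
  case=> IA hI hm; split=> // J IJ JA hJ; apply/eqP; rewrite eqEsubset IJ andbT.
  apply/negPn/negP => /subsetPn [y yJ yI].
  apply: (hm y (subsetP JA _ yJ) yI); apply: indep_sub hJ _.
  by rewrite subUset sub1set yJ IJ.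
case=> IA hI hm; split=> // y yA yI hyI.
have := hm (y |: I) (subsetUr _ _); rewrite subUset sub1set yA IA => /(_ isT hyI) e.
by move: yI; rewrite -e setU11.
Qed.

Lemma maxi_card A I : maxi A I -> #|I| = rk B A.
Proof.
case=> IA hI hm.
apply/eqP; rewrite eqn_leq indep_card_le //=.
case: (hI) => C1 C1B IC1.
case: (rk_ex A) => Cm CmB ->.
set J := A :&: Cm.
have JA : J \subset A by apply: subsetIl.
have JC : J \subset Cm by apply: subsetIr.
clearbody J.
have core : forall C2, C2 \in B -> J \subset C2 -> C2 \subset J :|: C1 -> #|J| <= #|I|.
  move=> C2 C2B JC2 C2JC1.
  have s1 : J :\: I \subset C2 :\: C1.
    apply/subsetP => x; rewrite !inE => /andP [xI xJ].
    rewrite (subsetP JC2 _ xJ) andbT; apply/negP => xC1.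
    apply: (hm x (subsetP JA _ xJ) xI); exists C1 => //.
    by rewrite subUset sub1set xC1 IC1.
  have s2 : C1 :\: C2 \subset I :\: J.
    apply/subsetP => z; rewrite !inE => /andP [zC2 zC1].
    have zJ : z \notin J by apply: contra zC2 => /(subsetP JC2).
    rewrite zJ /=; apply/negPn/negP => zI.
    case: HB => _ Hex.
    have zD : z \in C1 :\: C2 by rewrite !inE zC2 zC1.
    case: (Hex _ _ C1B C2B z zD) => y; rewrite !inE => /andP [yC1 yC2] yB.
    have yJ : y \in J.
      by move: (subsetP C2JC1 _ yC2); rewrite !inE (negbTE yC1) orbF.
    have yI : y \notin I by apply: contra yC1 => /(subsetP IC1).
    apply: (hm y (subsetP JA _ yJ) yI); exists (y |: (C1 :\ z)) => //.
    apply: setUS; apply/subsetP => t tI; rewrite !inE (subsetP IC1 _ tI) andbT.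
    by apply: contraNneq zI => <-.
  have e : #|C2 :\: C1| = #|C1 :\: C2|.
    by rewrite !cardsD (bases_card C2B C1B) setIC.
  have l1 := subset_leq_card s1; have l2 := subset_leq_card s2.
  have := cardsID I J; have := cardsID J I; rewrite setIC; lia.
suff gen : forall k C2, C2 \in B -> J \subset C2 -> #|C2 :\: (J :|: C1)| <= k -> #|J| <= #|I|.
  have JCm' : Cm \in B := CmB.
  exact: (gen _ Cm CmB JC (leqnn _)).
elim=> [|k IH] C2 C2B JC2 hk.
  apply: (core C2 C2B JC2); rewrite -setD_eq0 -cards_eq0; lia.
case: (eqVneq (C2 :\: (J :|: C1)) set0) => [e|].
  by apply: (core C2 C2B JC2); rewrite -setD_eq0 e.
case/set0Pn => y; rewrite !inE negb_or => /andP [/andP [yJ yC1] yC2].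
case: HB => _ Hex.
have yD : y \in C2 :\: C1 by rewrite !inE yC1 yC2.
case: (Hex _ _ C2B C1B y yD) => x; rewrite !inE => /andP [xC2 xC1] xB.
apply: IH (x |: (C2 :\ y)) xB _ _.
  apply/subsetP => t tJ; rewrite !inE (subsetP JC2 _ tJ) andbT.
  by apply/orP; right; apply: contraNneq yJ => <-.
have sub : (x |: (C2 :\ y)) :\: (J :|: C1) \subset (C2 :\: (J :|: C1)) :\ y.
  apply/subsetP => t; rewrite !inE.
  case: (eqVneq t x) => [->|_]; first by rewrite xC1 !orbT.
  by rewrite /= => /andP [-> /andP [-> ->]].
have := subset_leq_card sub.
move: hk; rewrite (cardsD1 y (C2 :\: (J :|: C1))) !inE yC2 (negbTE yJ) (negbTE yC1) /=.
by rewrite add1n ltnS => h1 h2; apply: leq_trans h2 h1.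
Qed.


Lemma maxi_of_card A I : I \subset A -> indep B I -> #|I| = rk B A -> maxi A I.
Proof.
move=> IA hI e; split=> // y yA yI hy.
have := indep_card_le hy (_ : y |: I \subset A).
rewrite subUset sub1set yA IA => /(_ isT); rewrite cardsU1 yI e add1n ltnn //.
Qed.

Lemma extend A I : I \subset A -> indep B I -> exists2 I' : {set 'I_n}, I \subset I' & maxi A I'.
Proof.
move: {2}#|A :\: I| (leqnn #|A :\: I|) => k.
elim: k I => [|k IH] I hk IA hI.
  exists I => //; split=> // y yA yI.
  move: hk; rewrite leqn0 cards_eq0 setD_eq0 => /subsetP /(_ _ yA).
  by rewrite (negbTE yI).
case: (classic (exists y, [/\ y \in A, y \notin I & indep B (y |: I)])).
  case=> y [yA yI hy].
  have [I' h1 h2] : exists2 I' : {set 'I_n}, y |: I \subset I' & maxi A I'.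
    apply: IH => //; last by rewrite subUset sub1set yA IA.
    have : #|A :\: I| = 1 + #|A :\: (y |: I)|.
      rewrite (cardsD1 y (A :\: I)) !inE yA yI; congr (_ + _).
      by apply: eq_card => t; rewrite !inE negb_or andbA.
    move: hk; rewrite -[#|A :\: (y |: I)|]/(#|_|) => a b; rewrite b add1n ltnS in a; exact: a.
  by exists I' => //; apply: subset_trans h1; apply: subsetUr.
move=> hno; exists I => //; split=> // y yA yI hy; apply: hno; by exists y; split.
Qed.

Lemma maxi_self I : indep B I -> maxi I I.
Proof. by move=> hI; split=> // y ->. Qed.

Lemma mem_cl x A : (x \in cl B A) = (rk B (x |: A) == rk B A).
Proof. by rewrite inE. Qed.

Lemma cl_ext A : A \subset cl B A.
Proof. by apply/subsetP => x xA; rewrite mem_cl setU1_in. Qed.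

Lemma clK1 A I x : maxi A I -> x \in cl B A -> x \notin I -> ~ indep B (x |: I).
Proof.
move=> hm; have e := maxi_card hm; case: hm => IA hI _.
rewrite mem_cl => /eqP ex xI hx.
have := indep_card_le hx (_ : x |: I \subset x |: A).
by rewrite setUS // cardsU1 xI ex -e add1n ltnn => /(_ isT).
Qed.

Lemma clK2 A I x : maxi A I -> ~ indep B (x |: I) -> x \in cl B A.
Proof.
move=> hm hx; case: (boolP (x \in A)) => xA; first exact: (subsetP (cl_ext A)).
have e := maxi_card hm; case: hm => IA hI hmm.
have : maxi (x |: A) I.
  split=> //; first by apply: subset_trans IA (subsetUr _ _).
  move=> y; rewrite !inE => /orP [/eqP -> _ //|]; exact: hmm.
by move/maxi_card; rewrite mem_cl -e => ->.
Qed.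

Lemma maxi_ex A : exists I, maxi A I.
Proof.
have [C CB _] := rk_ex A.
have [I' _ h] := extend (sub0set A) (indep_sub (basis_indep CB) (sub0set C)).
by exists I'.
Qed.

Lemma cl_mono A (A' : {set 'I_n}) : A \subset A' -> cl B A \subset cl B A'.
Proof.
move=> AA'; apply/subsetP => x xc.
case: (boolP (x \in A')) => xA'; first exact: (subsetP (cl_ext A')).
have [I hI] := maxi_ex A.
have [IA hIi _] := hI.
have [I' II' hI'] := extend (subset_trans IA AA') hIi.
apply: (clK2 hI') => hx.
have xI : x \notin I by apply: contra xA' => /(subsetP IA) /(subsetP AA').
apply: (clK1 hI xc xI); apply: indep_sub hx _; exact: setUS.
Qed.

Lemma rk_cl A : rk B (cl B A) = rk B A.
Proof.
have [I hI] := maxi_ex A.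
rewrite -(maxi_card hI); apply/esym/maxi_card.
have [IA hIi _] := hI; split=> //; first exact: subset_trans IA (cl_ext A).
by move=> y yc yI; apply: clK1 hI yc yI.
Qed.

Lemma cl_idem A : cl B (cl B A) = cl B A.
Proof.
apply/eqP; rewrite eqEsubset cl_ext andbT; apply/subsetP => x.
rewrite !mem_cl rk_cl => /eqP e.
have h1 := rk_mono (setUS [set x] (cl_ext A)); rewrite e in h1.
have h2 := rk_mono (subsetUr [set x] A).
by rewrite eqn_leq h1.
Qed.

Lemma flat_cl A : flat B (cl B A).
Proof. exact: cl_idem. Qed.

Lemma cl_sub_flat A F : flat B F -> A \subset F -> cl B A \subset F.
Proof. by move=> hF AF; rewrite -hF; apply: cl_mono. Qed.

Lemma indep_notcl I x : indep B I -> x \in I -> x \notin cl B (I :\ x).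
Proof.
move=> hI xI; apply/negP => xc.
have hm : maxi (I :\ x) (I :\ x) by apply: maxi_self; apply: indep_sub hI (subsetDl _ _).
by apply: (clK1 hm xc); [rewrite !inE eqxx | rewrite setD1K].
Qed.

Lemma notcl_indep I : (forall x, x \in I -> x \notin cl B (I :\ x)) -> indep B I.
Proof.
move=> h.
have [J JI] : exists J, maxi I J by apply: maxi_ex.
have [JsI hJ hm] := JI.
suff -> : I = J by [].
apply/eqP; rewrite eqEsubset JsI andbT; apply/subsetP => x xI.
apply/negPn/negP => xJ.
have := h x xI; apply/negP/negPn.
apply: (subsetP (cl_mono (_ : J \subset I :\ x))).
  by apply/subsetP => t tJ; rewrite !inE (subsetP JsI _ tJ) andbT; apply: contraNneq xJ => <-.
exact: (clK2 (maxi_self hJ) (hm x xI xJ)).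
Qed.

Lemma maxi_cl A I : maxi A I -> A \subset cl B I.
Proof.
move=> hm; have [IA hI hmm] := hm; apply/subsetP => y yA.
case: (boolP (y \in I)) => yI; first exact: (subsetP (cl_ext I)).
exact: (clK2 (maxi_self hI) (hmm y yA yI)).
Qed.

Lemma cl_rank1 x y : y \in cl B [set x] -> y \notin cl B set0 -> x \in cl B [set y].
Proof.
rewrite !mem_cl rk0 setU0 => /eqP e hy.
have h1 : rk B [set y] = 1.
  apply/eqP; rewrite eqn_leq; have := rk_le_card [set y]; rewrite cards1 => -> /=.
  by rewrite lt0n.
have h2 : rk B [set x] <= 1 by have := rk_le_card [set x]; rewrite cards1.
have h3 := rk_mono (subsetUl [set y] [set x]).
have e' : x |: [set y] = y |: [set x] by rewrite setUC.
rewrite e' e h1 eqn_leq h2 /= -h1 -e; exact: h3.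
Qed.

Lemma loop_full x : connected B -> x \in cl B set0 -> [set x] = setT.
Proof.
move=> hc; rewrite mem_cl rk0 setU0 => /eqP h0.
apply/eqP; apply/negPn/negP => hT.
apply: (hc [set x]) => //; first by apply/set0Pn; exists x; rewrite inE.
rewrite h0 add0n; apply/eqP; rewrite eqn_leq rk_mono ?subsetT //=.
have [C CB ->] := rk_ex setT.
apply: leq_trans (rk_ge _ CB); apply: subset_leq_card; apply/subsetP => t.
rewrite !inE /= => tC; rewrite tC andbT; apply/eqP => tx; subst t.
have := rk_ge [set x] CB; rewrite h0 leqn0 cards_eq0 => /eqP e.
have : x \in [set x] :&: C by rewrite !inE eqxx tC.
by rewrite e inE.
Qed.

End MatroidBasics.
Unset Default Proof Using.

Section Maxel.
Variable n : nat.
Implicit Types (P T : {set {set 'I_n}}) (G H K : {set 'I_n}).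

Lemma maxel_sub P : maxel P \subset P.
Proof. by apply/subsetP => G; rewrite inE => /andP []. Qed.

Lemma maxel_ex P G : G \in P -> exists2 K, K \in maxel P & G \subset K.
Proof.
move=> GP.
have PG : (G \in P) && (G \subset G) by rewrite GP subxx.
case: (@arg_maxnP _ G (fun K => (K \in P) && (G \subset K)) (fun K => #|K|) PG).
move=> K /andP [KP GK] hmax; exists K => //.
rewrite inE KP /=; apply/forallP => H; apply/implyP => HP; apply/negP => KH.
have := hmax H; rewrite HP (subset_trans GK (proper_sub KH)) => /(_ isT) h.
by have := proper_card KH; rewrite ltnNge; move: h => /= ->.
Qed.

Lemma maxel_anti P G H : G \in maxel P -> H \in maxel P -> G != H -> ~~ (G \subset H).
Proof.
rewrite inE => /andP [_ /forallP hG]; rewrite inE => /andP [HP _] ne; apply/negP => GH.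
by have := hG H; rewrite HP /= properEneq ne GH.
Qed.

End Maxel.

Definition anti (n : nat) (T : {set {set 'I_n}}) :=
  forall H1 H2, H1 \in T -> H2 \in T -> H1 != H2 -> ~~ (H1 \subset H2).

Section Building.
Variable n : nat.
Variables (B Gs S : {set {set 'I_n}}).
Hypothesis HB : is_matroid B.
Hypothesis Hc : connected B.
Hypothesis HGb : building_set B Gs.
Hypothesis HSn : nested B Gs S.
Set Default Proof Using "All".
Implicit Types (P T : {set {set 'I_n}}) (G H K X Y : {set 'I_n}) (x y i : 'I_n).

Lemma S_Gs G : G \in S -> G \in Gs.
Proof. by case: HSn => /subsetP h _ /h. Qed.

Lemma Gs_flat G : G \in Gs -> flat B G.
Proof. by case: HGb => h _ /h []. Qed.

Lemma Gs_ne G : G \in Gs -> G != set0.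
Proof. by case: HGb => h _ /h []. Qed.

Lemma S_flat G : G \in S -> flat B G.
Proof. by move/S_Gs/Gs_flat. Qed.

Definition Mx X := maxel [set G in Gs | G \subset X].

Lemma Mx_Gs X K : K \in Mx X -> K \in Gs.
Proof. by move/(subsetP (maxel_sub _)); rewrite inE => /andP []. Qed.

Lemma Mx_sub X K : K \in Mx X -> K \subset X.
Proof. by move/(subsetP (maxel_sub _)); rewrite inE => /andP []. Qed.

Lemma Mx_flat X K : K \in Mx X -> flat B K.
Proof. by move/Mx_Gs/Gs_flat. Qed.

Lemma Mx_ex X H : H \in Gs -> H \subset X -> exists2 K, K \in Mx X & H \subset K.
Proof. by move=> HG' HX; apply: maxel_ex; rewrite inE HG' HX. Qed.

Lemma iso_le X f g : join_iso B (Mx X) X -> prod_elt B (Mx X) f -> prod_elt B (Mx X) g ->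
  join_map B (Mx X) f \subset join_map B (Mx X) g -> forall K, K \in Mx X -> f K \subset g K.
Proof. by case=> _ _ h hf hg /(h _ _ hf hg). Qed.

Lemma flat_join_map X f : flat B (join_map B (Mx X) f).
Proof. exact (flat_cl HB _). Qed.

Definition single X K0 Y : {ffun {set 'I_n} -> {set 'I_n}} :=
  [ffun K => if K \in Mx X then (if K == K0 then Y else cl B set0) else set0].

Lemma single_elt X K0 Y : flat B Y -> Y \subset K0 -> prod_elt B (Mx X) (single X K0 Y).
Proof.
move=> fY YK G; rewrite /single ffunE; split=> [GM|]; last by move/negbTE => ->.
rewrite GM; case: (eqVneq G K0) => [->|_]; first by [].
by split; [exact (flat_cl HB _) | apply (cl_sub_flat HB) => //; [exact: Mx_flat GM|exact: sub0set]].
Qed.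

Lemma join_single X K0 Y : K0 \in Mx X -> flat B Y -> join_map B (Mx X) (single X K0 Y) = Y.
Proof.
move=> KM fY; rewrite /join_map.
suff -> : \bigcup_(G in Mx X) single X K0 Y G = Y by [].
apply/eqP; rewrite eqEsubset; apply/andP; split.
  apply/bigcupsP => G GM; rewrite /single ffunE GM.
  by case: (G == K0) => //; apply (cl_sub_flat HB) => //; apply: sub0set.
by apply: (bigcup_max K0) => //; rewrite /single ffunE KM eqxx.
Qed.

Lemma nested_join T : T \subset S -> 1 < #|T| -> anti T -> join B T \notin Gs.
Proof. by case: HSn => _ h TS hT ha; apply: h. Qed.

Lemma join_sub_flat T Y : flat B Y -> (forall H, H \in T -> H \subset Y) -> join B T \subset Y.
Proof. by move=> fY h; apply (cl_sub_flat HB) => //; apply/bigcupsP. Qed.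

Lemma sub_join T H : H \in T -> H \subset join B T.
Proof. by move=> HT; rewrite /join; apply: (subset_trans _ (cl_ext HB _)); apply: bigcup_sup HT. Qed.

Lemma setupX T : T \subset S -> 1 < #|T| -> anti T ->
  [/\ flat B (join B T), join B T \notin Gs, join_iso B (Mx (join B T)) (join B T)
    & forall H, H \in T -> exists2 K, K \in Mx (join B T) & H \subset K].
Proof.
move=> TS hT ha.
have [H HT] : exists H, H \in T by apply/set0Pn; rewrite -card_gt0; apply: ltnW.
have fX : flat B (join B T) by exact (flat_cl HB _).
have ne : join B T != set0.
  have /set0Pn [x xH] := Gs_ne (S_Gs (subsetP TS _ HT)).
  by apply/set0Pn; exists x; apply: (subsetP (sub_join HT)).
split=> //; first exact: nested_join.
  by case: HGb => _ h; apply: h.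
move=> H' H'T; apply: Mx_ex; [exact: S_Gs (subsetP TS _ H'T)| exact: sub_join].
Qed.

Lemma Mx_not_all T K : T \subset S -> 1 < #|T| -> anti T -> K \in Mx (join B T) ->
  ~ (forall H, H \in T -> H \subset K).
Proof.
move=> TS hT ha KM hall.
have [fX nX _ _] := setupX TS hT ha.
have e : K = join B T.
  apply/eqP; rewrite eqEsubset (Mx_sub KM) /=.
  by apply: join_sub_flat => //; exact: Mx_flat KM.
by move: nX; rewrite -e (Mx_Gs KM).
Qed.

Lemma anti_sub T T' : T' \subset T -> anti T -> anti T'.
Proof. by move=> /subsetP s h H1 H2 /s h1 /s h2; apply: h. Qed.

Lemma union_indep T (I : {set 'I_n} -> {set 'I_n}) : T \subset S -> anti T ->
  (forall H, H \in T -> maxi B H (I H)) -> indep B (\bigcup_(H in T) I H).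
Proof.
move: {2}#|T| (leqnn #|T|) => k; elim: k T => [|k IH] T hk TS ha hI.
  move: hk; rewrite leqn0 cards_eq0 => /eqP ->; rewrite big_set0.
  have [C CB _] := rk_ex HB set0; exists C => //; exact: sub0set.
case: (leqP #|T| 1) => hT.
  case: (posnP #|T|) => [/eqP|h0].
    rewrite cards_eq0 => /eqP ->; rewrite big_set0.
    have [C CB _] := rk_ex HB set0; exists C => //; exact: sub0set.
  have /cards1P [H eT] : #|T| == 1 by rewrite eqn_leq hT h0.
  have HT : H \in T by rewrite eT set11.
  by rewrite eT big_set1; case: (hI H HT).
have [fX nX iso hK] := setupX TS hT ha.
apply: (notcl_indep HB) => x /bigcupP [H1 H1T xI1].
have [K1 K1M H1K1] := hK H1 H1T.
set TK := [set H in T | H \subset K1].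
have TKT : TK \subset T by apply/subsetP => H; rewrite inE => /andP [].
have hTK : #|TK| <= k.
  rewrite -ltnS; apply: leq_trans hk; apply: proper_card.
  rewrite properE TKT /=; apply/negP => TTK.
  apply: (Mx_not_all TS hT ha K1M) => H HT.
  by move: (subsetP TTK _ HT); rewrite inE => /andP [].
have iV := IH TK hTK (subset_trans TKT TS) (anti_sub TKT ha) (fun H h => hI H (subsetP TKT _ h)).
have xV : x \in \bigcup_(H in TK) I H by apply/bigcupP; exists H1 => //; rewrite inE H1T H1K1.
have nxV := indep_notcl HB iV xV.
apply/negP => xU.
set f : {ffun {set 'I_n} -> {set 'I_n}} := [ffun K => if K \in Mx (join B T)
   then cl B ((\bigcup_(H in T | H \subset K) I H) :\ x) else set0].
have pf : prod_elt B (Mx (join B T)) f.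
  move=> G; rewrite /f ffunE; split=> [GM|]; last by move/negbTE => ->.
  rewrite GM; split; first exact (flat_cl HB _).
  apply (cl_sub_flat HB) => //; first exact: Mx_flat GM.
  apply/subsetP => t; rewrite inE => /andP [_ /bigcupP [H /andP [HT HG'] tI]].
  have [HI _ _] := hI H HT.
  exact: (subsetP HG' _ (subsetP HI _ tI)).
have xH1 : x \in H1 by have [HI _ _] := hI H1 H1T; exact: (subsetP HI).
have ph : prod_elt B (Mx (join B T)) (single (join B T) K1 (cl B [set x])).
  apply: single_elt; first exact (flat_cl HB _).
  apply (cl_sub_flat HB); [exact: Mx_flat K1M|by rewrite sub1set (subsetP H1K1)].
have le := iso_le iso ph pf.
have hj : join_map B (Mx (join B T)) (single (join B T) K1 (cl B [set x])) \subset
          join_map B (Mx (join B T)) f.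
  rewrite join_single //; last exact (flat_cl HB _).
  apply (cl_sub_flat HB); first exact: flat_join_map.
  rewrite sub1set; apply: (subsetP (cl_mono HB _)) xU.
  apply/subsetP => t; rewrite !inE => /andP [tx /bigcupP [H HT tI]].
  have [K KM HK] := hK H HT.
  apply/bigcupP; exists K => //; rewrite /f ffunE KM.
  apply: (subsetP (cl_ext HB _)); rewrite !inE tx /=; apply/bigcupP; exists H => //.
  by rewrite HT HK.
have := le hj K1 K1M; rewrite /single /f !ffunE K1M eqxx.
have -> : \bigcup_(H in T | H \subset K1) I H = \bigcup_(H in TK) I H.
  by apply: eq_bigl => H; rewrite inE.
move=> sub.
have : x \in cl B [set x] by apply: (subsetP (cl_ext HB _)); rewrite inE.
by move/(subsetP sub); rewrite (negbTE nxV).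
Qed.


Lemma Gminus_sub G : G \in S -> Gminus B S G \subset G.
Proof.
move=> GS; rewrite /Gminus; case: ifP => _; first exact: sub0set.
apply: join_sub_flat; first exact: S_flat.
by move=> H /(subsetP (maxel_sub _)); rewrite inE => /andP [_ /proper_sub].
Qed.

Lemma sub_Gminus G H : H \in S -> H \proper G -> H \subset Gminus B S G.
Proof.
move=> HS HG; rewrite /Gminus.
have HP : H \in [set H0 in S | H0 \proper G] by rewrite inE HS HG.
case: ifP => [/eqP e|_]; first by move: HP; rewrite e inE.
have [K KM HK] := maxel_ex HP.
exact: subset_trans HK (sub_join KM).
Qed.

Lemma loop_S i G : i \in cl B set0 -> G \in S -> G = setT.
Proof.
move=> il GS; have e := loop_full HB Hc il.
have /set0Pn [y yG] := Gs_ne (S_Gs GS).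
have yi : y = i by apply/set1P; rewrite e inE.
apply/setP => t; rewrite inE.
have : t \in [set i] by rewrite e inE.
by move/set1P => ->; rewrite -yi.
Qed.

Lemma disjoint_incomp G H x : G \in S -> H \in S -> ~~ (G \subset H) -> ~~ (H \subset G) ->
  x \in G -> x \in H -> False.
Proof.
move=> GS HS nGH nHG xG xH.
set T := [set G; H].
have GH : G != H by apply: contraNneq nGH => ->.
have TS : T \subset S by apply/subsetP => t; rewrite !inE => /orP [] /eqP ->.
have hT : 1 < #|T| by rewrite cards2 GH.
have ha : anti T.
  move=> H1 H2; rewrite !inE => /orP [] /eqP -> /orP [] /eqP -> //; by rewrite eqxx.
have [fX nX iso hK] := setupX TS hT ha.
have [K1 K1M GK1] := hK G (setU11 _ _).
have [K2 K2M HK2] : exists2 K, K \in Mx (join B T) & H \subset K.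
  by apply: hK; rewrite !inE eqxx orbT.
have K12 : K1 != K2.
  apply/negP => /eqP e; apply: (Mx_not_all TS hT ha K1M) => t.
  by rewrite !inE => /orP [] /eqP ->; [exact: GK1 | rewrite e; exact: HK2].
have p1 : prod_elt B (Mx (join B T)) (single (join B T) K1 (cl B [set x])).
  apply: single_elt; first exact (flat_cl HB _).
  apply (cl_sub_flat HB); [exact: Mx_flat K1M|by rewrite sub1set (subsetP GK1)].
have p2 : prod_elt B (Mx (join B T)) (single (join B T) K2 (cl B [set x])).
  apply: single_elt; first exact (flat_cl HB _).
  apply (cl_sub_flat HB); [exact: Mx_flat K2M|by rewrite sub1set (subsetP HK2)].
have := iso_le iso p1 p2.
rewrite !join_single // ?subxx; try exact (flat_cl HB _).
move=> /(_ isT K1 K1M); rewrite /single !ffunE K1M eqxx (negbTE K12) => sub.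
have xl : x \in cl B set0.
  by apply: (subsetP sub); apply: (subsetP (cl_ext HB _)); rewrite inE.
have eG := loop_S xl GS; have eH := loop_S xl HS.
by move: nGH; rewrite eG eH subxx.
Qed.

Lemma Dprop G H i : G \in S -> H \in S -> i \in G -> i \notin Gminus B S G -> i \in H ->
  G \subset H.
Proof.
move=> GS HS iG iGm iH.
case: (boolP (G \subset H)) => // nGH.
case: (boolP (H \subset G)) => HG.
  have HpG : H \proper G by rewrite properE HG nGH.
  by move: iGm; rewrite (subsetP (sub_Gminus HS HpG) _ iH).
by case: (disjoint_incomp GS HS nGH HG iG iH).
Qed.

Lemma cover_ex i : setT \in S -> exists2 G, G \in S & i \in G :\: Gminus B S G.
Proof.
move=> TS0.
have P0 : (setT \in S) && (i \in setT) by rewrite TS0 inE.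
case: (@arg_minnP _ setT (fun G => (G \in S) && (i \in G)) (fun G => #|G|) P0).
move=> G /andP [GS iG] hmin.
exists G => //; rewrite inE iG andbT.
have nomin : forall H, H \in S -> H \proper G -> i \notin H.
  move=> H HS HG; apply/negP => iH; have := hmin H; rewrite HS iH => /(_ isT).
  by rewrite leqNgt (proper_card HG).
rewrite /Gminus; case: ifP => [_|/negbT Pne]; first by rewrite inE.
have noloop : i \notin cl B set0.
  apply/negP => il; have /set0Pn [H] := Pne; rewrite inE => /andP [HS HG].
  by move: HG; rewrite (loop_S il HS) (loop_S il GS) properxx.
set P := [set H in S | H \proper G] in Pne *.
set T := maxel P.
have TP : T \subset P by exact: maxel_sub.
have TS : T \subset S by apply: subset_trans TP _; apply/subsetP => t; rewrite inE => /andP [].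
have ha : anti T by move=> H1 H2 h1 h2 ne; apply: maxel_anti h1 h2 ne.
have nomin' : forall H, H \in T -> i \notin H.
  by move=> H /(subsetP TP); rewrite inE => /andP [HS HG]; apply: nomin.
case: (leqP #|T| 1) => hT.
  case: (posnP #|T|) => [/eqP|h0].
    have /set0Pn [H0 H0P] := Pne.
    have [K KT _] := maxel_ex H0P.
    by rewrite cards_eq0 => /eqP eT; move: KT; rewrite -/T eT inE.
  have /cards1P [H eT] : #|T| == 1 by rewrite eqn_leq hT h0.
  have HT : H \in T by rewrite eT set11.
  rewrite -/T eT /join big_set1.
  have HS := subsetP TS _ HT.
  by rewrite (S_flat HS); apply: nomin'.
apply/negP => iX.
have [fX nX iso hK] := setupX TS hT ha.
have [_ hsurj _] := iso.
have iX' : [set i] \subset join B T by rewrite sub1set.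
have [f pf ef] := hsurj (cl B [set i]) (flat_cl HB _) (cl_sub_flat HB fX iX').
set X := join B T in fX nX iso hK iX iX' pf ef.
have ii : i \in cl B [set i] by apply: (subsetP (cl_ext HB _)); rewrite inE.
have [K KM iK] : exists2 K, K \in Mx X & i \in K.
  case: (classic (exists K, K \in Mx X /\ exists y, y \in f K /\ y \notin cl B set0)).
    case=> K [KM [y [yf yl]]]; exists K => //.
    have [ffK fKK] := (pf K).1 KM.
    have yc : y \in cl B [set i].
      by rewrite -ef; apply: (subsetP (cl_ext HB _)); apply/bigcupP; exists K.
    have iy := cl_rank1 HB yc yl.
    apply: (subsetP fKK); apply: (subsetP (cl_sub_flat HB ffK (_ : [set y] \subset f K))) => //.
    by rewrite sub1set.
  move=> hno; exfalso; move: noloop; apply/negP/negPn.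
  have sub : \bigcup_(K in Mx X) f K \subset cl B set0.
    apply/bigcupsP => K KM; apply/subsetP => y yf.
    apply/negPn/negP => yl; apply: hno; exists K; split => //; exists y; by split.
  have := cl_sub_flat HB (flat_cl HB _) sub; rewrite -/(join_map B (Mx X) f) ef.
  by move/subsetP; apply.
set TK := [set H in T | H \subset K].
have TKT : TK \subset T by apply/subsetP => H; rewrite inE => /andP [].
set g : {ffun {set 'I_n} -> {set 'I_n}} :=
  [ffun K => if K \in Mx X then join B [set H in T | H \subset K] else set0].
set top : {ffun {set 'I_n} -> {set 'I_n}} := [ffun K => if K \in Mx X then K else set0].
have pg : prod_elt B (Mx X) g.
  move=> K'; rewrite /g ffunE; split=> [KM'|]; last by move/negbTE => ->.
  rewrite KM'; split; first exact (flat_cl HB _).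
  apply: join_sub_flat; first exact: Mx_flat KM'.
  by move=> H; rewrite inE => /andP [].
have ptop : prod_elt B (Mx X) top.
  move=> K'; rewrite /top ffunE; split=> [KM'|]; last by move/negbTE => ->.
  by rewrite KM'; split; [exact: Mx_flat KM'|exact: subxx].
have hj : join_map B (Mx X) top \subset join_map B (Mx X) g.
  apply (cl_sub_flat HB); first exact: flat_join_map.
  apply/bigcupsP => K' KM'; rewrite /top ffunE KM'.
  apply: subset_trans (Mx_sub KM') _.
  apply: join_sub_flat; first exact: flat_join_map.
  move=> H HT; have [K'' K''M HK''] := hK H HT.
  apply: subset_trans (cl_ext HB _); apply: (subset_trans _ (bigcup_sup K'' K''M)).
  rewrite /g ffunE K''M; apply: sub_join; by rewrite inE HT HK''.
have := iso_le iso ptop pg hj KM; rewrite /top /g !ffunE KM -/TK => KTK.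
have iTK : i \in join B TK by apply: (subsetP KTK).
have TKS : TK \subset S := subset_trans TKT TS.
case: (leqP #|TK| 1) => hTK.
  case: (posnP #|TK|) => [/eqP|h0].
    rewrite cards_eq0 => /eqP eT; move: iTK; rewrite eT /join big_set0.
    by rewrite (negbTE noloop).
  have /cards1P [H eT] : #|TK| == 1 by rewrite eqn_leq hTK h0.
  have HT : H \in TK by rewrite eT set11.
  move: iTK; rewrite eT /join big_set1 (S_flat (subsetP TKS _ HT)).
  by apply/negP; apply: nomin'; apply: (subsetP TKT).
have nK := nested_join TKS hTK (anti_sub TKT ha).
have eK : join B TK = K.
  apply/eqP; rewrite eqEsubset KTK andbT.
  apply: join_sub_flat; first exact: Mx_flat KM.
  by move=> H; rewrite inE => /andP [].
by move: nK; rewrite eK (Mx_Gs KM).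
Qed.



End Building.
Unset Default Proof Using.

Section Bases.
Variable n : nat.
Variables (B Gs S : {set {set 'I_n}}).
Hypothesis HB : is_matroid B.
Hypothesis Hc : connected B.
Hypothesis HGb : building_set B Gs.
Hypothesis HSn : nested B Gs S.
Hypothesis HT : setT \in S.
Set Default Proof Using "All".
Implicit Types (P T : {set {set 'I_n}}) (G H K X Y b : {set 'I_n}) (x y i : 'I_n).

Local Notation Gm := (Gminus B S).

Lemma Gm_spec G : G \in S -> (Gm G = set0) \/
  (exists T, [/\ Gm G = join B T, T \subset S, anti T, (forall H, H \in T -> H \proper G)
      & (forall H, H \in S -> H \proper G -> exists2 K, K \in T & H \subset K)]).
Proof.
move=> GS; rewrite /Gminus; case: ifP => _; [by left|right].
set P := [set H in S | H \proper G]; exists (maxel P); split => //.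
- apply: subset_trans (maxel_sub _) _; by apply/subsetP => t; rewrite inE => /andP [-> _].
- by move=> H1 H2 h1 h2 ne; apply: maxel_anti h1 h2 ne.
- by move=> H /(subsetP (maxel_sub _)); rewrite inE => /andP [].
- by move=> H HS HG; apply: maxel_ex; rewrite inE HS HG.
Qed.

Lemma indep_full I : indep B I -> #|I| = rk B setT -> I \in B.
Proof.
case=> C CB IC e.
have : #|C| <= #|I| by rewrite e; have := rk_ge HB setT CB; rewrite setTI.
move=> le; suff -> : I = C by [].
by apply/eqP; rewrite eqEcard IC le.
Qed.

Lemma minor_sub G f : minor_bases B (Gm G) G f -> f \subset G :\: Gm G.
Proof.
case=> tau [[tG _ _] _ ->]; by apply: setSD.
Qed.

Section Assemble.
Variable f : {ffun {set 'I_n} -> {set 'I_n}}.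
Hypothesis hf : forall G, G \in S -> minor_bases B (Gm G) G (f G).
Let b := \bigcup_(G in S) f G.

Lemma b_split G : G \in S -> b :&: G = (b :&: Gm G) :|: f G.
Proof.
move=> GS; apply/eqP; rewrite eqEsubset; apply/andP; split.
  apply/subsetP => x; rewrite inE => /andP [/bigcupP [H HS xH] xG].
  have := subsetP (minor_sub (hf HS)) _ xH; rewrite inE => /andP [xHm xH'].
  have HG := Dprop HB Hc HGb HSn HS GS xH' xHm xG.
  rewrite !inE; case: (boolP (x \in Gm G)) => xGm.
    by rewrite andbT; apply/orP; left; apply/bigcupP; exists H.
  case: (eqVneq H G) => [<-|ne]; first by rewrite xH orbT.
  have HpG : H \proper G by rewrite properEneq ne HG.
  by move: xGm; rewrite (subsetP (sub_Gminus HB Hc HGb HSn HS HpG) _ xH').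
apply/subsetP => x; rewrite !inE => /orP [/andP [xb xGm]|xf].
  by rewrite xb (subsetP (Gminus_sub HB Hc HGb HSn GS) _ xGm).
have := subsetP (minor_sub (hf GS)) _ xf; rewrite inE => /andP [_ ->].
by rewrite andbT; apply/bigcupP; exists G.
Qed.

Lemma assemble G : G \in S -> indep B (b :&: G) /\ #|b :&: G| = rk B G.
Proof.
move: {2}#|G| (leqnn #|G|) => k; elim: k G => [|k IH] G hk GS.
  exfalso; have /set0Pn [x xG] := Gs_ne HB Hc HGb HSn (S_Gs HB Hc HGb HSn GS).
  by move: hk; rewrite leqn0 cards_eq0 => /eqP e; move: xG; rewrite e inE.
have [tau [mt [s ms st] ef]] := hf GS.
move/(maxiP HB): mt => mt; move/(maxiP HB): ms => ms.
have ctau := maxi_card HB mt; have cs := maxi_card HB ms.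
have [tG itau _] := mt; have [sGm is_ _] := ms.
have eb := b_split GS.
have fGm : f G :&: Gm G = set0.
  by apply/setP => x; rewrite ef !inE; case: (x \in Gm G) => //=; rewrite andbF.
case: (Gm_spec GS) => [e0|[T [eT TS aT TG Tmax]]].
  have -> : b :&: G = tau.
    by rewrite eb ef e0 setI0 set0U setD0.
  by split.
set U := \bigcup_(H in T) (b :&: H).
have mH : forall H, H \in T -> maxi B H (b :&: H).
  move=> H HT'; have HS := subsetP TS _ HT'.
  have [iH cH] : indep B (b :&: H) /\ #|b :&: H| = rk B H.
    apply: IH => //; rewrite -ltnS; apply: leq_trans hk; exact: proper_card (TG H HT').
  by apply: (maxi_of_card HB) => //; apply: subsetIr.
have iU : indep B U by apply: (union_indep HB Hc HGb HSn TS aT mH).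
have eU : b :&: Gm G = U.
  apply/eqP; rewrite eqEsubset; apply/andP; split.
    apply/subsetP => x; rewrite inE => /andP [xb xGm]; have xb' := xb.
    move: xb => /bigcupP [H HS xH].
    have := subsetP (minor_sub (hf HS)) _ xH; rewrite inE => /andP [xHm xH'].
    have xG := subsetP (Gminus_sub HB Hc HGb HSn GS) _ xGm.
    have HG := Dprop HB Hc HGb HSn HS GS xH' xHm xG.
    case: (eqVneq H G) => [eHG|ne].
      by move: fGm => /setP /(_ x); rewrite !inE xGm andbT -eHG xH.
    have HpG : H \proper G by rewrite properEneq ne HG.
    have [K KT HK] := Tmax H HS HpG.
    by apply/bigcupP; exists K => //; rewrite inE xb' (subsetP HK).
  apply/bigcupsP => H HT'; apply: setIS; rewrite eT; exact: (sub_join HB Hc HGb HSn HT').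
have GmU : Gm G \subset cl B U.
  rewrite eT; apply: (join_sub_flat HB Hc HGb HSn (flat_cl HB U)).
  move=> H HT'; apply: subset_trans (maxi_cl HB (mH H HT')) _.
  apply: (cl_mono HB); exact: bigcup_sup HT'.
have UGm : U \subset Gm G by rewrite -eU; apply: subsetIr.
have cU : #|U| = rk B (Gm G).
  apply/eqP; rewrite eqn_leq (indep_card_le HB) //= -(rk_indep HB iU) -(rk_cl HB U).
  exact (rk_mono HB GmU).
have ctG : #|tau :&: Gm G| = rk B (Gm G).
  apply/eqP; rewrite eqn_leq (indep_card_le HB) ?subsetIr //=; last exact (indep_sub HB itau (subsetIl _ _)).
  by rewrite -cs; apply: subset_leq_card; rewrite subsetI st sGm.
have cf : #|f G| + rk B (Gm G) = #|tau|.
  by rewrite ef -ctG addnC cardsID.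
have dis : [disjoint U & f G].
  rewrite -setI_eq0; apply/eqP/setP => x; rewrite !inE; apply/negP => /andP [xU xf].
  by move: fGm => /setP /(_ x); rewrite !inE xf (subsetP UGm _ xU).
have cV : #|b :&: G| = #|tau|.
  by rewrite eb eU cardsU (_ : U :&: f G = set0) ?cards0 ?subn0 ?cU ?(addnC (rk _ _)) //; apply/eqP; rewrite setI_eq0.
have iV : indep B (b :&: G).
  apply (card_rk_indep HB); rewrite cV -(rk_indep HB itau) -(rk_cl HB (b :&: G)).
  apply (rk_mono HB); apply/subsetP => x xt.
  case: (boolP (x \in Gm G)) => xGm.
    have UV : U \subset b :&: G by rewrite eb -eU; apply: subsetUl.
    exact (subsetP (cl_mono HB UV) x (subsetP GmU x xGm)).
  apply: (subsetP (cl_ext HB _)); rewrite eb; apply/setUP; right; by rewrite ef inE xGm xt.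
by split=> //; rewrite cV ctau.
Qed.

Lemma assemble_basis : b \in B /\ forall G, G \in S -> #|b :&: G| = rk B G.
Proof.
split; last by move=> G GS; case: (assemble GS).
have [i c] := assemble HT; rewrite setIT in i c; exact: indep_full.
Qed.

End Assemble.

Lemma decompose b : b \in B -> (forall G, G \in S -> #|b :&: G| = rk B G) ->
  (forall G, G \in S -> minor_bases B (Gm G) G ((b :&: G) :\: Gm G)) /\
  b = \bigcup_(G in S) ((b :&: G) :\: Gm G).
Proof.
move=> bB hb; split.
  move=> G GS; exists (b :&: G); split => //.
    apply/(maxiP HB); apply: (maxi_of_card HB); [exact: subsetIr|exact (indep_sub HB (basis_indep HB bB) (subsetIl _ _))|exact: hb].
  exists (b :&: Gm G); last by apply: setIS; exact (Gminus_sub HB Hc HGb HSn GS).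
  apply/(maxiP HB); apply: (maxi_of_card HB); [exact: subsetIr|exact (indep_sub HB (basis_indep HB bB) (subsetIl _ _))|].
  case: (Gm_spec GS) => [->|[T [eT TS aT TG Tmax]]].
    by rewrite setI0 cards0 rk0.
  have ibG : indep B (b :&: Gm G) := indep_sub HB (basis_indep HB bB) (subsetIl _ _).
  set U := \bigcup_(H in T) (b :&: H).
  have UbG : U \subset b :&: Gm G.
    apply/bigcupsP => H HT'; apply: setIS; rewrite eT; exact: (sub_join HB Hc HGb HSn HT').
  have iU : indep B U := indep_sub HB ibG UbG.
  have GmU : Gm G \subset cl B U.
    rewrite eT; apply: (join_sub_flat HB Hc HGb HSn (flat_cl HB U)).
    move=> H HT'; have HS := subsetP TS _ HT'.
    have mH : maxi B H (b :&: H).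
      apply: (maxi_of_card HB); [exact: subsetIr|exact (indep_sub HB (basis_indep HB bB) (subsetIl _ _))|exact: hb].
    apply: subset_trans (maxi_cl HB mH) _.
    apply: (cl_mono HB); exact: bigcup_sup HT'.
  apply/eqP; rewrite eqn_leq (indep_card_le HB) ?subsetIr //=.
  rewrite -(rk_indep HB ibG); apply: leq_trans (rk_mono HB GmU) _.
  by rewrite (rk_cl HB); exact (rk_mono HB UbG).
apply/eqP; rewrite eqEsubset; apply/andP; split.
  apply/subsetP => x xb; have [G GS xG] := cover_ex HB Hc HGb HSn x HT.
  apply/bigcupP; exists G => //; move: xG; rewrite !inE xb => /andP [-> ->].
  by [].
by apply/bigcupsP => G _; apply: subset_trans (subsetDl _ _) (subsetIl _ _).
Qed.

End Bases.
Unset Default Proof Using.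

Unset Implicit Arguments.
Local Open Scope ring_scope.

Section Weights.
Variables (R : realType) (n : nat).

Lemma card_sum (C G : {set 'I_n}) :
  \sum_(i in C) ((i \in G)%:R : R) = (#|C :&: G|)%:R.
Proof.
rewrite -sum1_card natr_sum.
rewrite (eq_bigl (fun i => (i \in C) && (i \in G))); last by move=> i; rewrite inE.
rewrite big_mkcondr /=; apply: eq_bigr => i _.
by case: (i \in G).
Qed.

Lemma wsumD (u v : 'rV[R]_n) C : wsum (u + v) C = wsum u C + wsum v C.
Proof. by rewrite /wsum -big_split /=; apply: eq_bigr => i _; rewrite mxE. Qed.

Lemma wsumZ_incv (d : R) (G C : {set 'I_n}) : wsum (d *: incv R G) C = d * (#|C :&: G|)%:R.
Proof.
rewrite /wsum -card_sum mulr_sumr; apply: eq_bigr => i _.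
by rewrite !mxE.
Qed.

Lemma wsum_cone (S : {set {set 'I_n}}) (lam : {ffun {set 'I_n} -> R}) C :
  wsum (\sum_(G in S) lam G *: incv R G) C = \sum_(G in S) lam G * (#|C :&: G|)%:R.
Proof.
rewrite /wsum.
under eq_bigr do rewrite summxE.
rewrite exchange_big /=; apply: eq_bigr => G _.
rewrite -wsumZ_incv /wsum; apply: eq_bigr => i _; by [].
Qed.

End Weights.


Theorem theorem4p4 (R : realType) (n : nat) (B : {set {set 'I_n}})
    (Gs S : {set {set 'I_n}}) (w : 'rV[R]_n) :
  is_matroid B -> connected B ->
  building_set B Gs -> nested B Gs S -> [set: 'I_n] \in S ->
  in_relint (in_cone S) w ->
  [/\ (forall G H, G \in S -> H \in S -> G != H ->
         [disjoint G :\: Gminus B S G & H :\: Gminus B S H]),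
      \bigcup_(G in S) (G :\: Gminus B S G) = [set: 'I_n]
    & forall b : {set 'I_n}, Mw_bases B w b <->
        exists2 f : {ffun {set 'I_n} -> {set 'I_n}},
          (forall G, G \in S -> minor_bases B (Gminus B S G) G (f G))
          & b = \bigcup_(G in S) f G].
Proof.
move=> HB Hc HGb HSn HT hw.
have [[lam [lam0 ew]] [eps eps0 hrel]] := hw.
split.
- move=> G H GS HS ne; rewrite -setI_eq0; apply/eqP/setP => x; rewrite !inE.
  apply/negP => /andP [/andP [xGm xG] /andP [xHm xH]].
  have GH := Dprop HB Hc HGb HSn GS HS xG xGm xH.
  have HG := Dprop HB Hc HGb HSn HS GS xH xHm xG.
  by move: ne; rewrite (_ : G = H) ?eqxx //; apply/eqP; rewrite eqEsubset GH HG.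
- apply/setP => x; rewrite inE; apply/bigcupP.
  by have [G GS xG] := cover_ex HB Hc HGb HSn x HT; exists G.
move=> b; split.
  case=> bB hmax.
  have hex : forall G : {set 'I_n}, exists t : {set 'I_n},
      G \in S -> minor_bases B (Gminus B S G) G t.
    move=> G; case: (boolP (G \in S)) => GS; last by exists set0.
    have [s ms] := maxi_ex HB (Gminus B S G).
    have [sGm is_ _] := ms.
    have [tau st mt] := extend HB (subset_trans sGm (Gminus_sub HB Hc HGb HSn GS)) is_.
    exists (tau :\: Gminus B S G) => _; exists tau; split => //.
      by apply/(maxiP HB).
    by exists s => //; apply/(maxiP HB).
  have [f0 hf0] := fin_all_exists hex.
  set g0 : {ffun {set 'I_n} -> {set 'I_n}} := [ffun G => f0 G].
  have hg0 : forall G, G \in S -> minor_bases B (Gminus B S G) G (g0 G).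
    by move=> G GS; rewrite ffunE; apply: hf0.
  have [b0B hb0] := assemble_basis HB Hc HGb HSn HT hg0.
  set b0 := \bigcup_(G in S) g0 G in b0B hb0.
  have hb : forall G, G \in S -> #|b :&: G| = rk B G.
    move=> G0 G0S; apply/eqP; rewrite eqn_leq; apply/andP; split.
      by rewrite setIC; apply: (rk_ge HB _ bB).
    set d := eps / 2.
    have d0 : 0 < d by rewrite divr_gt0.
    set v := incv R G0.
    set u := w - d *: v.
    have inc : in_cone S (w + d *: v).
      exists [ffun G => lam G + (G == G0)%:R * d]; split.
        move=> G GS; rewrite ffunE; apply: addr_ge0; first exact: lam0.
        by apply: mulr_ge0; [exact: ler0n|exact: ltW].
      rewrite ew.
      under [X in _ = X]eq_bigr do rewrite ffunE scalerDl.
      rewrite big_split /=; congr (_ + _).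
      rewrite (bigD1 G0) //= eqxx mul1r big1 ?addr0 // => G /andP [_ ne].
      by rewrite (negbTE ne) mul0r scale0r.
    have aff : in_aff (in_cone S) u.
      exists 2, (fun j : 'I_2 => if j == ord0 then w else w + d *: v),
                (fun j : 'I_2 => if j == ord0 then 2 else -1); split.
      - move=> j; case: (j == ord0) => //; by exists lam.
      - rewrite !big_ord_recl big_ord0 /=; lra.
      - rewrite !big_ord_recl big_ord0 /= addr0 scaleN1r scaler_nat mulr2n opprD addrA addrK.
        by [].
    have close : forall i, `|u 0 i - w 0 i| < eps.
      move=> i; rewrite /u /v !mxE addrAC subrr add0r normrN.
      case: (i \in G0); rewrite ?mulr1 ?mulr0 ?normr0 // gtr0_norm //; rewrite /d; lra.
    have [mu [mu0 eu]] := hrel u aff close.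
    have ew' : w = (\sum_(G in S) mu G *: incv R G) + d *: v by rewrite -eu /u subrK.
    have := hmax b0 b0B; rewrite ew' !wsumD !wsum_cone !wsumZ_incv.
    have s1 : \sum_(G in S) mu G * (#|b :&: G|)%:R <= \sum_(G in S) mu G * (#|b0 :&: G|)%:R.
      apply: ler_sum => G GS; rewrite hb0 //; apply: ler_wpM2l; first exact: mu0.
      by rewrite ler_nat setIC; apply: (rk_ge HB _ bB).
    rewrite hb0 // => h.
    have h2 : d * (rk B G0)%:R <= d * (#|b :&: G0|)%:R by lra.
    by move: h2; rewrite ler_pM2l // ler_nat.
  have [hd eb] := decompose HB Hc HGb HSn HT bB hb.
  exists [ffun G => (b :&: G) :\: Gminus B S G].
    by move=> G GS; rewrite ffunE; apply: hd.
  by rewrite {1}eb; apply: eq_bigr => G _; rewrite ffunE.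
case=> f hf ->.
have [bB hb] := assemble_basis HB Hc HGb HSn HT hf.
split => // C CB.
rewrite ew !wsum_cone; apply: ler_sum => G GS.
rewrite hb //; apply: ler_wpM2l; first exact: lam0.
by rewrite ler_nat setIC; apply: (rk_ge HB _ CB).
Qed.
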